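(* Let $m\ge2$, let $D=\mathrm{diag}(d_1,\dots,d_m)$ with $d_1<d_2<\dots<d_m$, let $\beta_1,\beta_2$ be nonzero reals and $\mathbf v_1,\mathbf v_2\in\mathbb R^m$, and suppose $\{1,\dots,m\}$ is partitioned into sets $J_1,J_2,J_3$ such that $\mathbf v_1$ vanishes on $J_3$ and $\mathbf v_2$ vanishes on $J_1$. Let $M=D+\beta_1\mathbf v_1\mathbf v_1^T+\beta_2\mathbf v_2\mathbf v_2^T$ and assume no $d_i$ is an eigenvalue of $M$. Then for every $j\in\{1,\dots,m-1\}$ and $k\in\{1,\dots,m-j\}$, the number of eigenvalues of $M$ (counted with multiplicity) in $I_{j,j+k}$ is at least $k-1$ and at most $k+1$. In particular each interval $(d_j,d_{j+1})$ contains at most two eigenvalues of $M$.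
   Context: $I_{j,j+k}:=\bigcup_{i=j}^{j+k-1}(d_i,d_{i+1})=(d_j,d_{j+k})\setminus\{d_{j+1},\dots,d_{j+k-1}\}$. *)

(* Defs.v *)
From HB Require Import structures.
From mathcomp Require Import all_boot all_order all_algebra.
Set Implicit Arguments. Unset Strict Implicit. Unset Printing Implicit Defensive.
Import Order.TTheory GRing.Theory Num.Theory.
Local Open Scope ring_scope.

(* Indices are 0-based: the paper's d_{i+1} is [d 0 i] for i : 'I_m.
   [in_I d j k x] means x lies in the paper's I_{j+1, j+1+k}, i.e. in the
   union of the open intervals (d_i, d_{i+1}) for j <= i < j + k (0-based). *)
Definition in_I (R : realFieldType) (m : nat) (d : 'rV[R]_m) (j k : nat) (x : R)
  : bool :=
  [exists i : 'I_m, [exists i' : 'I_m,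
     [&& (val i' == (val i).+1)%N, (j <= val i)%N, (val i < j + k)%N,
         d 0 i < x & x < d 0 i']]].

(* Main.v *)
From HB Require Import structures.
From mathcomp Require Import all_boot all_order all_algebra.
Require Import Defs.
From mathcomp Require Import sesquilinear spectral complex.
From mathcomp Require Import zify.
Set Implicit Arguments. Unset Strict Implicit. Unset Printing Implicit Defensive.
Import Order.TTheory GRing.Theory Num.Theory.
Local Open Scope ring_scope.
Local Open Scope sesquilinear_scope.

Section Gen.
Variable C : numClosedFieldType.

Definition qf n (A : 'M[C]_n) (x : 'rV[C]_n) : C := (x *m A *m x ^t*) 0 0.

Lemma trC_mul m n p (A : 'M[C]_(m, n)) (B : 'M[C]_(n, p)) :
  (A *m B) ^t* = B ^t* *m A ^t*.
Proof. by rewrite trmx_mul map_mxM. Qed.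

Lemma unitary_trmul n (P : 'M[C]_n) : P \is unitarymx -> P ^t* *m P = 1%:M.
Proof. by move=> PU; rewrite -invmx_unitary // mulVmx // unitarymx_unit. Qed.

Lemma qf_decomp n (P : 'M[C]_n) (a : 'rV[C]_n) x : P \is unitarymx ->
  qf (P ^t* *m diag_mx a *m P) x =
  \sum_i (x *m P ^t*) 0 i * a 0 i * ((x *m P ^t*) 0 i)^*.
Proof.
move=> PU; rewrite /qf.
have -> : x *m (P ^t* *m diag_mx a *m P) *m x ^t* =
   (x *m P ^t*) *m diag_mx a *m (x *m P ^t*) ^t*.
  by rewrite trC_mul trmxCK !mulmxA.
rewrite mxE; apply: eq_bigr => i _.
by rewrite mul_mx_diag !mxE.
Qed.

Lemma qf_nrm n (P : 'M[C]_n) (x : 'rV[C]_n) : P \is unitarymx ->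
  (x *m x ^t*) 0 0 = \sum_i (x *m P ^t*) 0 i * ((x *m P ^t*) 0 i)^*.
Proof.
move=> PU; have := qf_decomp (const_mx 1 : 'rV[C]_n) x PU.
rewrite diag_const_mx mulmx1 unitary_trmul // /qf mulmx1 => ->; rewrite /=.
by apply: eq_bigr => i _; rewrite [const_mx _ _ _]mxE mulr1.
Qed.


Definition sel n (S : {set 'I_n}) (P : 'M[C]_n) : 'M[C]_(#|S|, n) :=
  rowsub (fun i : 'I_#|S| => enum_val i) P.

Lemma sel_rank n (S : {set 'I_n}) (P : 'M[C]_n) : P \is unitarymx ->
  \rank (sel S P) = #|S|.
Proof.
move=> PU; apply: mxrank_unitary; apply/unitarymxP.
rewrite /sel trmx_mxsub map_mxsub -mxsub_mul (unitarymxP PU).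
apply/matrixP => i j; rewrite !mxE (inj_eq enum_val_inj) //.
Qed.

Lemma sel_supp n (S : {set 'I_n}) (P : 'M[C]_n) (x : 'rV[C]_n) l :
  P \is unitarymx -> (x <= sel S P)%MS -> l \notin S -> (x *m P ^t*) 0 l = 0.
Proof.
move=> PU /submxP [y ->] lS; rewrite -mulmxA /sel mul_rowsub_mx (unitarymxP PU).
rewrite mxE big1 // => i _; rewrite !mxE.
have : enum_val i \in S by exact: enum_valP.
by case: eqP => [-> |]; [rewrite (negbTE lS) | rewrite mulr0].
Qed.

Lemma coord_inv n (P : 'M[C]_n) (x : 'rV[C]_n) : P \is unitarymx ->
  x = x *m P ^t* *m P.
Proof. by move=> PU; rewrite -mulmxA unitary_trmul // mulmx1. Qed.


Lemma qf_shift n (P : 'M[C]_n) (a : 'rV[C]_n) x t : P \is unitarymx ->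
  qf (P ^t* *m diag_mx a *m P) x - t * (x *m x ^t*) 0 0 =
  \sum_i (a 0 i - t) * ((x *m P ^t*) 0 i * ((x *m P ^t*) 0 i)^*).
Proof.
move=> PU; rewrite qf_decomp // (qf_nrm x PU) mulr_sumr -sumrB.
by apply: eq_bigr => i _; rewrite mulrBl; congr (_ - _); rewrite mulrCA mulrA.
Qed.

Lemma G n r (P Q : 'M[C]_n) (a b : 'rV[C]_n) (K : 'M[C]_(r, n)) (t : C) :
  P \is unitarymx -> Q \is unitarymx ->
  (forall i, a 0 i \is Num.real) -> (forall i, b 0 i \is Num.real) ->
  t \is Num.real ->
  (forall x, (x <= K)%MS ->
     qf (Q ^t* *m diag_mx b *m Q) x <= qf (P ^t* *m diag_mx a *m P) x) ->
  (\rank K + #|[set i | (a 0 i < t)%R]| <= n + #|[set i | (b 0 i < t)%R]|)%N.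
Proof.
move=> PU QU ar br tr hK.
set Sa := [set i | a 0 i < t]; set Sb := [set i | b 0 i < t].
set Va := sel Sa P; set Wb := sel (~: Sb) Q.
have key : forall x : 'rV[C]_n, (x <= Va)%MS -> (x <= K)%MS -> (x <= Wb)%MS -> x = 0.
  move=> x xV xK xW; apply/eqP; apply/negPn/negP => x0.
  set nx := (x *m x ^t*) 0 0.
  have h1 : qf (P ^t* *m diag_mx a *m P) x - t * nx < 0.
    rewrite qf_shift //.
    have /existsP [l cl] : [exists l, (x *m P ^t*) 0 l != 0].
      apply: contraT; rewrite negb_exists => /forallP c0.
      move: x0; rewrite (coord_inv x PU).
      have -> : x *m P ^t* = 0.
        by apply/rowP => i; rewrite [RHS]mxE; apply/eqP; have := c0 i; rewrite negbK.
      by rewrite mul0mx eqxx.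
    have lS : l \in Sa.
      by apply: contraT => lS; move: cl; rewrite (sel_supp PU xV lS) eqxx.
    rewrite (bigD1 l) //=.
    rewrite -[X in _ < X](addr0 0).
    apply: ltr_leD.
      by rewrite inE in lS; rewrite nmulr_rlt0 ?mul_conjC_gt0 // subr_lt0.
    apply: sumr_le0 => i _.
    case: (boolP (i \in Sa)) => iS.
      rewrite inE in iS.
      by rewrite nmulr_rle0 ?mul_conjC_ge0 // subr_lt0.
    by rewrite (sel_supp PU xV iS) mul0r mulr0.
  have h2 : 0 <= qf (Q ^t* *m diag_mx b *m Q) x - t * nx.
    rewrite qf_shift //; apply: sumr_ge0 => i _.
    case: (boolP (i \in ~: Sb)) => iS.
      rewrite !inE -real_leNgt // in iS.
      by rewrite mulr_ge0 ?mul_conjC_ge0 // subr_ge0.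
    by rewrite (sel_supp QU xW iS) mul0r mulr0.
  have := lerB (hK x xK) (lexx (t * nx)).
  move=> h3; have := lt_le_trans (le_lt_trans h2 (le_lt_trans h3 h1)) (lexx 0).
  by rewrite ltxx.
have cap0 : (Va :&: K :&: Wb)%MS = 0.
  apply/row_matrixP => i; rewrite row0; apply: key.
  - by apply: submx_trans (row_sub i _) _; apply: submx_trans (capmxSl _ _) _; exact: capmxSl.
  - by apply: submx_trans (row_sub i _) _; apply: submx_trans (capmxSl _ _) _; exact: capmxSr.
  - by apply: submx_trans (row_sub i _) _; exact: capmxSr.
have e1 := mxrank_sum_cap Va K.
have e2 := mxrank_sum_cap (Va :&: K)%MS Wb.
rewrite cap0 mxrank0 in e2.
have r1 := rank_leq_col (Va + K)%MS.
have r2 := rank_leq_col (Va :&: K + Wb)%MS.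
have rV : \rank Va = #|Sa| by exact: sel_rank.
have rW : \rank Wb = #|~: Sb| by exact: sel_rank.
have cS := cardsC Sb; rewrite card_ord in cS.
lia.
Qed.


Definition N n (a : 'rV[C]_n) (t : C) := #|[set i | (a 0 i < t)%R]|.
Definition N' n (a : 'rV[C]_n) (t : C) := #|[set i | (a 0 i <= t)%R]|.

Lemma qfN n (A : 'M[C]_n) x : qf (- A) x = - qf A x.
Proof. by rewrite /qf mulmxN mulNmx mxE. Qed.

Lemma decN n (P : 'M[C]_n) (a : 'rV[C]_n) :
  P ^t* *m diag_mx (- a) *m P = - (P ^t* *m diag_mx a *m P).
Proof. by rewrite raddfN /= mulmxN mulNmx. Qed.

Lemma cntC n (a : 'rV[C]_n) t : (forall i, a 0 i \is Num.real) -> t \is Num.real ->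
  (#|[set i | (t < a 0 i)%R]| + N' a t)%N = n.
Proof.
move=> ar tr; have -> : [set i | (t < a 0 i)%R] = ~: [set i | (a 0 i <= t)%R].
  by apply/setP => i; rewrite !inE real_ltNge.
by rewrite addnC /N' cardsC card_ord.
Qed.

Lemma G' n r (P Q : 'M[C]_n) (a b : 'rV[C]_n) (K : 'M[C]_(r, n)) (t : C) :
  P \is unitarymx -> Q \is unitarymx ->
  (forall i, a 0 i \is Num.real) -> (forall i, b 0 i \is Num.real) ->
  t \is Num.real ->
  (forall x, (x <= K)%MS ->
     qf (Q ^t* *m diag_mx b *m Q) x <= qf (P ^t* *m diag_mx a *m P) x) ->
  (\rank K + N' a t <= n + N' b t)%N.
Proof.
move=> PU QU ar br tr hK.
have H := @G n r Q P (- b) (- a) K (- t) QU PU.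
have e : forall c : 'rV[C]_n, [set i | (- c) 0 i < - t] = [set i | t < c 0 i].
  by move=> c; apply/setP => i; rewrite !inE mxE ltrN2.
rewrite !e in H.
have ca := cntC ar tr; have cb := cntC br tr.
have {}H := H (fun i => ltac:(by rewrite mxE rpredN)) (fun i => ltac:(by rewrite mxE rpredN)) (ltac:(by rewrite rpredN)).
have {}H := H (fun x xK => ltac:(by rewrite !decN !qfN lerN2; exact: hK)).
move: H ca cb; rewrite /N'; set Xa := #|[set i | (t < a 0 i)%R]|; set Xb := #|[set i | (t < b 0 i)%R]|; lia.
Qed.

Lemma qf_add n (A : 'M[C]_n) (beta : C) (w : 'cV[C]_n) x :
  qf (A + beta *: (w *m w ^t*)) x =
  qf A x + beta * ((x *m w) 0 0 * ((x *m w) 0 0)^*).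
Proof.
rewrite /qf mulmxDr mulmxDl mxE; congr (_ + _).
rewrite -scalemxAr -scalemxAl mxE; congr (_ * _).
rewrite mulmxA -[x *m w *m _ *m _]mulmxA -trC_mul mxE big_ord1.
by rewrite [X in _ * X]mxE [(_ ^T) _ _]mxE.
Qed.


Lemma step n (P Q : 'M[C]_n) (a b : 'rV[C]_n) (w : 'cV[C]_n) (beta t : C) :
  P \is unitarymx -> Q \is unitarymx ->
  (forall i, a 0 i \is Num.real) -> (forall i, b 0 i \is Num.real) ->
  t \is Num.real -> beta \is Num.real -> beta != 0 ->
  Q ^t* *m diag_mx b *m Q = P ^t* *m diag_mx a *m P + beta *: (w *m w ^t*) ->
  [/\ (N b t <= N a t + (beta < 0)%R)%N, (N a t <= N b t + (0 < beta)%R)%N,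
      (N' b t <= N' a t + (beta < 0)%R)%N & (N' a t <= N' b t + (0 < beta)%R)%N].
Proof.
move=> PU QU ar br tr betar beta0 eB.
have rK : (n <= (\rank (kermx w)).+1)%N.
  by rewrite mxrank_ker; have := rank_leq_col w; lia.
have eqK : forall x, (x <= kermx w)%MS ->
    qf (Q ^t* *m diag_mx b *m Q) x = qf (P ^t* *m diag_mx a *m P) x.
  move=> x; rewrite sub_kermx => /eqP xw.
  by rewrite eB qf_add xw mxE mul0r mulr0 addr0.
have [bn|bp] : beta < 0 \/ 0 < beta.
  by move: beta0; rewrite (real_neqr_lt betar (rpred0 _)) => /orP[] ->; [left|right].
- have le1 : forall x, qf (Q ^t* *m diag_mx b *m Q) x <= qf (P ^t* *m diag_mx a *m P) x.
    move=> x; rewrite eB qf_add gerDl.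
    by rewrite nmulr_rle0 ?mul_conjC_ge0.
  have h1 := @G n n P Q a b 1%:M t PU QU ar br tr (fun x _ => le1 x).
  have h2 := @G' n n P Q a b 1%:M t PU QU ar br tr (fun x _ => le1 x).
  have h3 := @G n _ Q P b a (kermx w) t QU PU br ar tr
    (fun x xK => ltac:(by rewrite (eqK x xK))).
  have h4 := @G' n _ Q P b a (kermx w) t QU PU br ar tr
    (fun x xK => ltac:(by rewrite (eqK x xK))).
  rewrite mxrank1 in h1 h2; rewrite bn (lt_gtF bn).
  rewrite /N /N' in h1 h2 h3 h4 *; split; lia.
- have le1 : forall x, qf (P ^t* *m diag_mx a *m P) x <= qf (Q ^t* *m diag_mx b *m Q) x.
    move=> x; rewrite eB qf_add lerDl.
    by rewrite mulr_ge0 ?mul_conjC_ge0 // ltW.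
  have h1 := @G n n Q P b a 1%:M t QU PU br ar tr (fun x _ => le1 x).
  have h2 := @G' n n Q P b a 1%:M t QU PU br ar tr (fun x _ => le1 x).
  have h3 := @G n _ P Q a b (kermx w) t PU QU ar br tr
    (fun x xK => ltac:(by rewrite (eqK x xK))).
  have h4 := @G' n _ P Q a b (kermx w) t PU QU ar br tr
    (fun x xK => ltac:(by rewrite (eqK x xK))).
  rewrite mxrank1 in h1 h2; rewrite bp (lt_gtF bp).
  rewrite /N /N' in h1 h2 h3 h4 *; split; lia.
Qed.

End Gen.

Section DD.
Variable R : realFieldType.
Variable n : nat.
Local Notation m := n.+1.
Variable d : 'rV[R]_m.
Hypothesis hd : forall i i' : 'I_m, (val i < val i')%N -> d 0 i < d 0 i'.

Lemma dlt i q : (d 0 i < d 0 q) = (i < q)%N.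
Proof.
case: (ltngtP i q) => h; first by rewrite hd.
  by apply/negbTE; rewrite -leNgt ltW // hd.
by rewrite (val_inj h) ltxx.
Qed.

Lemma dle i q : (d 0 i <= d 0 q) = (i <= q)%N.
Proof.
case: (ltngtP i q) => h; first by rewrite ltW // hd.
  by apply/negbTE; rewrite -ltNge hd.
by rewrite (val_inj h) lexx.
Qed.

Lemma card_lt p : (p <= m)%N -> #|[set i : 'I_m | (i < p)%N]| = p.
Proof.
move=> pm; rewrite -sum1dep_card -(big_mkord (fun i => (i < p)%N) (fun=> 1%N)).
rewrite (eq_bigl (fun i => true && (i < p)%N)) // -big_nat_widen //.
by rewrite sum_nat_const_nat muln1 subn0.
Qed.

Lemma inI_iff j k x : (forall i, x != d 0 i) -> (j + k < m)%N ->
  in_I d j k x = (d 0 (inord j) < x < d 0 (inord (j + k))).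
Proof.
move=> hx hjk.
have ej : (inord j : 'I_m) = j :> nat by rewrite inordK //; lia.
have ejk : (inord (j + k) : 'I_m) = (j + k)%N :> nat by rewrite inordK.
apply/idP/idP.
  case/existsP => i /existsP [i'] /and5P [/eqP ei' ji ik xi xi'].
  rewrite (le_lt_trans _ xi) ?(lt_le_trans xi') // dle ?ej ?ejk //.
  by rewrite ei'.
case/andP => jx xk.
have exP : exists i, (i < m)%N && (d 0 (inord i) < x) by exists j; rewrite jx; lia.
have ubP : forall i, (i < m)%N && (d 0 (inord i) < x) -> (i <= m)%N.
  by move=> i /andP [] /ltnW.
case: (ex_maxnP exP ubP) => i0 /andP [i0m i0x] imax.
have i0jk : (i0 < j + k)%N.
  by rewrite -ejk -[i0](inordK (n' := n)); try lia; rewrite -dlt (lt_trans i0x xk).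
have i1m : (i0.+1 < m)%N by lia.
apply/existsP; exists (inord i0); apply/existsP; exists (inord i0.+1).
have e0 : val (inord i0 : 'I_m) = i0 := inordK i0m.
have e1 : val (inord i0.+1 : 'I_m) = i0.+1 := inordK i1m.
rewrite e0 e1 i0x eqxx i0jk /=.
apply/andP; split.
  by apply: imax; rewrite jx andbT; lia.
have : ~~ ((i0.+1 < m)%N && (d 0 (inord i0.+1) < x)).
  by apply/negP => /imax; lia.
rewrite i1m /= -real_leNgt ?num_real // le_eqVlt => /orP [/eqP e|//].
by move: (hx (inord i0.+1)); rewrite e eqxx.
Qed.
End DD.

Lemma char_poly_conj (F : fieldType) n (P Pi D : 'M[F]_n) :
  Pi *m P = 1%:M -> char_poly (Pi *m D *m P) = char_poly D.
Proof.
move=> PiP; rewrite /char_poly /char_poly_mx.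
have e : 'X%:M - (map_mx polyC (Pi *m D *m P)) =
   ((map_mx polyC Pi)) *m ('X%:M - (map_mx polyC D)) *m ((map_mx polyC P)).
  rewrite mulmxBr mulmxBl !map_mxM; congr (_ - _).
  rewrite scalar_mxC -mulmxA mul_scalar_mx scalemxAr.
  by rewrite -scalemxAr -map_mxM PiP map_mx1 scalemx1.
rewrite e !det_mulmx mulrC mulrA -det_mulmx -map_mxM.
by rewrite (mulmx1C PiP) map_mx1 det1 mul1r.
Qed.

Section Concrete.
Variable R : rcfType.
Local Notation C := (R[i]).
Local Notation RC := (real_complex R).

Lemma spec n (A : 'M[R]_n) : A^T = A ->
  exists P (l : 'rV[C]_n), [/\ P \is unitarymx, forall i, l 0 i \is Num.real &
     map_mx RC A = P ^t* *m diag_mx l *m P].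
Proof.
move=> sA; set Ac := map_mx RC A.
have hA : Ac \is hermsymmx.
  apply: realsym_hermsym.
    by apply/is_hermitianmxP; rewrite expr0 scale1r map_mx_id // /Ac map_trmx sA.
  by apply/mxOverP => i j; rewrite mxE; apply/complex_realP; eexists.
have /orthomx_spectralP eA := hermitian_normalmx hA.
exists (spectralmx Ac), (spectral_diag Ac); split.
- exact: spectral_unitarymx.
- by move=> i; have /mxOverP := hermitian_spectral_diag_real hA; apply.
- by rewrite -invmx_unitary ?spectral_unitarymx.
Qed.


Lemma conj_RC m n (X : 'M[R]_(m, n)) : map_mx Num.Def.conjC (map_mx RC X) = map_mx RC X.
Proof.
apply/matrixP => i j; rewrite !mxE conj_Creal //.
by apply/complex_realP; eexists.
Qed.

Lemma RC_real (x : R) : RC x \is Num.real.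
Proof. by apply/complex_realP; eexists. Qed.

Lemma cnt_enum n (Q : pred 'I_n) : count Q (enum 'I_n) = #|[set i | Q i]|.
Proof. by rewrite -sum1_count -sum1dep_card big_enum_cond /=. Qed.

Lemma charpoly_seq n (A : 'M[R]_n) P (l : 'rV[C]_n) :
  P \is unitarymx -> (forall i, l 0 i \is Num.real) ->
  map_mx RC A = P ^t* *m diag_mx l *m P ->
  char_poly A = \prod_(x <- [seq complex.Re (l 0 i) | i : 'I_n]) ('X - x%:P).
Proof.
move=> PU lr eA; apply: (@map_poly_inj _ _ RC).
rewrite map_char_poly eA char_poly_conj ?unitary_trmul //.
rewrite char_poly_trig ?diag_mx_is_trig // rmorph_prod big_map big_enum /=.
apply: eq_bigr => i _; rewrite rmorphB /= map_polyX map_polyC /= mxE eqxx mulr1n.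
by rewrite RRe_real.
Qed.

Lemma cnt_s n (l : 'rV[C]_n) (p : pred R) :
  (forall i, l 0 i \is Num.real) ->
  count p [seq complex.Re (l 0 i) | i : 'I_n] = #|[set i | p (complex.Re (l 0 i))]|.
Proof. by move=> _; rewrite count_map cnt_enum. Qed.


Lemma ltRC0 (x : R) : (RC x < 0) = (x < 0).
Proof. by rewrite -(rmorph0 RC) ltcR. Qed.
Lemma gtRC0 (x : R) : (0 < RC x) = (0 < x).
Proof. by rewrite -(rmorph0 RC) ltcR. Qed.

Lemma cnt_split (s : seq R) a b : a < b ->
  count (fun x => (x < b)%R) s = (count (fun x => (x <= a)%R) s + count (fun x => (a < x < b)%R) s)%N.
Proof.
move=> ab; elim: s => //= x s ->.
case: (leP x a) => hx /=.
  by rewrite (le_lt_trans hx ab) /=; lia.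
by case: (x < b); lia.
Qed.

Lemma arithB (ND N1 NM ND' N1' NM' p1 p2 q1 q2 : nat) :
  (N1 <= ND + q1)%N -> (ND <= N1 + p1)%N -> (N1' <= ND' + q1)%N -> (ND' <= N1' + p1)%N ->
  (NM <= N1 + q2)%N -> (N1 <= NM + p2)%N -> (NM' <= N1' + q2)%N -> (N1' <= NM' + p2)%N ->
  [/\ (NM <= ND + (q1 + q2))%N, (ND <= NM + (p1 + p2))%N,
      (NM' <= ND' + (q1 + q2))%N & (ND' <= NM' + (p1 + p2))%N].
Proof. move=> *; split; lia. Qed.

Lemma arithC j k X cb cb' ca ca' p q : (1 <= k)%N -> (p + q = 2)%N ->
  (cb <= j + k + q)%N -> (cb' + p >= (j + k).+1)%N ->
  (ca <= j + q)%N -> (ca' + p >= j.+1)%N ->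
  cb = (ca' + X)%N -> cb = cb' -> ca = ca' -> (k.-1 <= X <= k.+1)%N.
Proof. move=> *; lia. Qed.

Lemma cbound_lemma n (d : 'rV[R]_n.+1)
  (hd : forall i i' : 'I_n.+1, (val i < val i')%N -> d 0 i < d 0 i')
  (s : seq R) (sd : forall x, x \in s -> forall i, x != d 0 i) (p q : nat)
  (pq : (p + q = 2)%N)
  (bounds : forall t,
   [/\ (count (fun x => (x < t)%R) s <= #|[set i | (d 0 i < t)%R]| + q)%N,
       (#|[set i | (d 0 i < t)%R]| <= count (fun x => (x < t)%R) s + p)%N,
       (count (fun x => (x <= t)%R) s <= #|[set i | (d 0 i <= t)%R]| + q)%N &
       (#|[set i | (d 0 i <= t)%R]| <= count (fun x => (x <= t)%R) s + p)%N])
  j k : (1 <= k)%N -> (j + k < n.+1)%N ->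
    (k.-1 <= count (fun x => (d 0 (inord j) < x < d 0 (inord (j + k)))%R) s <= k.+1)%N.
Proof.
move=> k1 jk.
set a := d 0 (inord j); set b := d 0 (inord (j + k)).
have ej : (inord j : 'I_n.+1) = j :> nat by rewrite inordK //; lia.
have ejk : (inord (j + k) : 'I_n.+1) = (j + k)%N :> nat by rewrite inordK.
have ab : a < b by rewrite /a /b dlt // ej ejk; lia.
have cs := cnt_split s ab.
have Eb : count (fun x => (x < b)%R) s = count (fun x => (x <= b)%R) s.
  apply: eq_in_count => x xs; rewrite le_eqVlt.
  by have := sd x xs (inord (j + k)); rewrite /b eq_sym => /negbTE ->.
have Ea : count (fun x => (x < a)%R) s = count (fun x => (x <= a)%R) s.
  apply: eq_in_count => x xs; rewrite le_eqVlt.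
  by have := sd x xs (inord j); rewrite /a eq_sym => /negbTE ->.
have Db : #|[set i | (d 0 i < b)%R]| = (j + k)%N.
  rewrite -(card_lt (n := n) (p := (j + k)%N)); last lia.
  by apply: eq_card => i; rewrite !inE /b dlt // ejk.
have Db' : #|[set i | (d 0 i <= b)%R]| = (j + k).+1.
  rewrite -(card_lt (n := n) (p := (j + k).+1)); last lia.
  by apply: eq_card => i; rewrite !inE /b dle // ejk.
have Da : #|[set i | (d 0 i < a)%R]| = j.
  rewrite -(card_lt (n := n) (p := j)); last lia.
  by apply: eq_card => i; rewrite !inE /a dlt // ej.
have Da' : #|[set i | (d 0 i <= a)%R]| = j.+1.
  rewrite -(card_lt (n := n) (p := j.+1)); last lia.
  by apply: eq_card => i; rewrite !inE /a dle // ej.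
have [x1 _ _ x4] := bounds b.
have [y1 _ _ y4] := bounds a.
rewrite Db Db' in x1 x4; rewrite Da Da' in y1 y4.
exact: (arithC k1 pq x1 x4 y1 y4 cs Eb Ea).
Qed.

Lemma main_lemma (n : nat)
  (d : 'rV[R]_n.+1) (hd : forall i i' : 'I_n.+1, (val i < val i')%N -> d 0 i < d 0 i')
  (beta1 beta2 : R) (hb1 : beta1 != 0) (hb2 : beta2 != 0)
  (v1 v2 : 'cV[R]_n.+1) :
  let M := diag_mx d + beta1 *: (v1 *m v1^T) + beta2 *: (v2 *m v2^T) in
  (forall i : 'I_n.+1, ~~ eigenvalue M (d 0 i)) ->
  exists s : seq R,
    char_poly M = \prod_(x <- s) ('X - x%:P) /\
    (forall j k : nat, (1 <= k)%N -> (j + k < n.+1)%N ->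
       (k.-1 <= count (in_I d j k) s <= k.+1)%N) /\
    (forall i i' : 'I_n.+1, val i' = (val i).+1 ->
       (count (fun x : R => (d 0 i < x < d 0 i')%R) s <= 2)%N).
Proof.
move=> M noeig.
set M1 := diag_mx d + beta1 *: (v1 *m v1^T).
have symv : forall v : 'cV[R]_n.+1, (v *m v^T)^T = v *m v^T.
  by move=> v; rewrite trmx_mul trmxK.
have sym1 : M1^T = M1 by rewrite /M1 linearD /= linearZ /= tr_diag_mx symv.
have symM : M^T = M by rewrite /M linearD /= linearZ /= sym1 symv.
have [P1 [l1 [P1U l1r e1]]] := spec sym1.
have [P2 [l2 [P2U l2r e2]]] := spec symM.
set s := [seq complex.Re (l2 0 i) | i : 'I_n.+1].
have cpM := charpoly_seq P2U l2r e2.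
have sd : forall x, x \in s -> forall i, x != d 0 i.
  move=> x xs i; apply: contraNneq (noeig i) => <-.
  by rewrite eigenvalue_root_char cpM root_prod_XsubC.
set l0 := map_mx RC d.
have P0U : (1%:M : 'M[C]_n.+1) \is unitarymx.
  by apply/unitarymxP; rewrite trmx1 map_mx1 mulmx1.
have l0r : forall i, l0 0 i \is Num.real by move=> i; rewrite mxE RC_real.
have wE : forall v : 'cV[R]_n.+1, map_mx RC (v *m v^T) = map_mx RC v *m (map_mx RC v) ^t*.
  by move=> v; rewrite map_mxM map_trmx conj_RC.
have eM1 : P1 ^t* *m diag_mx l1 *m P1 =
    1%:M ^t* *m diag_mx l0 *m 1%:M + RC beta1 *: (map_mx RC v1 *m (map_mx RC v1) ^t*).
  rewrite -e1 /M1 trmx1 map_mx1 mul1mx mulmx1 map_mxD map_mxZ wE.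
  by rewrite map_diag_mx.
have eM : P2 ^t* *m diag_mx l2 *m P2 =
    P1 ^t* *m diag_mx l1 *m P1 + RC beta2 *: (map_mx RC v2 *m (map_mx RC v2) ^t*).
  by rewrite -e2 -e1 /M map_mxD map_mxZ wE.
have b1n : RC beta1 != 0 by rewrite -(rmorph0 RC) (inj_eq (@complexI R)).
have b2n : RC beta2 != 0 by rewrite -(rmorph0 RC) (inj_eq (@complexI R)).
have ND : forall t, N l0 (RC t) = #|[set i | (d 0 i < t)%R]|.
  by move=> t; apply: eq_card => i; rewrite !inE mxE ltcR.
have ND' : forall t, N' l0 (RC t) = #|[set i | (d 0 i <= t)%R]|.
  by move=> t; apply: eq_card => i; rewrite !inE mxE lecR.
have NM : forall t, N l2 (RC t) = count (fun x => (x < t)%R) s.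
  by move=> t; rewrite cnt_s // /N; apply: eq_card => i; rewrite !inE -ltcR RRe_real.
have NM' : forall t, N' l2 (RC t) = count (fun x => (x <= t)%R) s.
  by move=> t; rewrite cnt_s // /N'; apply: eq_card => i; rewrite !inE -lecR RRe_real.
have bounds : forall t,
   [/\ (count (fun x => (x < t)%R) s <= #|[set i | (d 0 i < t)%R]| + ((beta1 < 0)%R + (beta2 < 0)%R))%N,
       (#|[set i | (d 0 i < t)%R]| <= count (fun x => (x < t)%R) s + ((0 < beta1)%R + (0 < beta2)%R))%N,
       (count (fun x => (x <= t)%R) s <= #|[set i | (d 0 i <= t)%R]| + ((beta1 < 0)%R + (beta2 < 0)%R))%N &
       (#|[set i | (d 0 i <= t)%R]| <= count (fun x => (x <= t)%R) s + ((0 < beta1)%R + (0 < beta2)%R))%N].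
  move=> t.
  have [a1 a2 a3 a4] := step P0U P1U l0r l1r (RC_real t) (RC_real beta1) b1n eM1.
  have [c1 c2 c3 c4] := step P1U P2U l1r l2r (RC_real t) (RC_real beta2) b2n eM.
  rewrite ltRC0 gtRC0 in a1 a2 a3 a4; rewrite ltRC0 gtRC0 in c1 c2 c3 c4.
  rewrite ND ND' in a1 a2 a3 a4; rewrite NM NM' in c1 c2 c3 c4.
  exact: (arithB a1 a2 a3 a4 c1 c2 c3 c4).
have pq : ((0 < beta1)%R + (0 < beta2)%R + ((beta1 < 0)%R + (beta2 < 0)%R) = 2)%N.
  move: hb1 hb2; rewrite !neq_lt.
  by case/orP => h1; case/orP => h2; rewrite h1 h2 ?(lt_gtF h1) ?(lt_gtF h2).
have cbound := cbound_lemma hd sd pq bounds.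
exists s; split; first exact: cpM.
split.
  move=> j k k1 jk.
  suff -> : count (in_I d j k) s =
      count (fun x => d 0 (inord j) < x < d 0 (inord (j + k))) s by exact: cbound.
  by apply: eq_in_count => x xs; rewrite inI_iff //; apply: sd.
move=> i i' ei.
have := cbound i 1%N (leqnn 1) ltac:(rewrite addn1 -ei; exact: ltn_ord).
rewrite inord_val.
have -> : (inord (i + 1) : 'I_n.+1) = i' by apply: val_inj; rewrite /= inordK addn1 -ei // ltn_ord.
by case/andP.
Qed.

End Concrete.

Local Close Scope sesquilinear_scope.
Unset Implicit Arguments. Set Strict Implicit.

Theorem lemma1 (R : rcfType) (m : nat) (hm : (2 <= m)%N)
  (d : 'rV[R]_m) (hd : forall i i' : 'I_m, (val i < val i')%N -> d 0 i < d 0 i')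
  (beta1 beta2 : R) (hb1 : beta1 != 0) (hb2 : beta2 != 0)
  (v1 v2 : 'cV[R]_m) (J1 J2 J3 : {set 'I_m})
  (hJ12 : [disjoint J1 & J2]) (hJ13 : [disjoint J1 & J3])
  (hJ23 : [disjoint J2 & J3]) (hJ : J1 :|: J2 :|: J3 = [set: 'I_m])
  (hv1 : forall i, i \in J3 -> v1 i 0 = 0)
  (hv2 : forall i, i \in J1 -> v2 i 0 = 0) :
  let M := diag_mx d + beta1 *: (v1 *m v1^T) + beta2 *: (v2 *m v2^T) in
  (forall i : 'I_m, ~~ eigenvalue M (d 0 i)) ->
  exists s : seq R,
    char_poly M = \prod_(x <- s) ('X - x%:P) /\
    (forall j k : nat, (1 <= k)%N -> (j + k < m)%N ->
       (k.-1 <= count (in_I d j k) s <= k.+1)%N) /\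
    (forall i i' : 'I_m, val i' = (val i).+1 ->
       (count (fun x : R => (d 0 i < x < d 0 i')%R) s <= 2)%N).
Proof.
destruct m as [|n]; first by [].
exact: (main_lemma hd hb1 hb2).
Qed.
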